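(* Let $\lambda\ge0$, $\delta>0$, $0<a<b$, let $\rho_c$ and $D$ be as in the context, let $0\le\eta<\infty$, let $Q$ be regular superadditive, and let $q\colon\mathbb{R}\times\mathbb{R}\to[0,\infty]$ be measurable. Assume that for all $s<t$ and $x<y$, $$D\int_s^t\int_{\mathbb{R}}\Big[\rho_{b-a}(s,x,u,z)+\rho_a(u,z,t,y)\Big]q(u,z)\,dz\,du\le\eta+Q(s,t).$$ Then $q\in\mathcal N(\rho_b,\rho_a,(b/a)^{1/2},\eta,Q)$.
   Context: For $t>0$, $z\in\mathbb{R}$ let $p(t,z)=(4\pi)^{-1/2}\delta t z^{-3/2}\exp\{-(\delta t-2\sqrt{\lambda}z)^2/(4z)\}\mathbf 1_{z>0}$; for $c>0$, $\rho_c(s,x,t,y)=c\,p(c(t-s),c(y-x))$ if $s<t$ and $0$ otherwise. $D=\left(\frac{b}{b-a}\right)^{3/2}\exp[\frac32 l(\frac{a}{b-a})]$ with $l(\alpha)=\max_{\tau\ge\alpha\vee1/\alpha}[\ln(1+\tau)-\frac{\tau-\alpha}{1+\tau}\ln(\alpha\tau)]$. $Q\colon\{(s,t):s<t\}\to[0,\infty)$ is regular superadditive if $Q(s,u)+Q(u,t)\le Q(s,t)$ for $s<u<t$ and $Q(s,t)$ is right-continuous in $s$ and left-continuous in $t$. For transition densities $p,p^*$ on $\mathbb{R}$, $C\ge1$, $\eta\in[0,\infty)$ and regular superadditive $Q$, we write $q\in\mathcal N(p,p^*,C,\eta,Q)$ if $q\ge0$ is measurable on $\mathbb{R}\times\mathbb{R}$,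 $\int_s^t\int_{\mathbb{R}}p(s,x,u,z)q(u,z)p^*(u,z,t,y)\,dz\,du\le[\eta+Q(s,t)]p^*(s,x,t,y)$ for all $s<t$, $x,y$, and $p\le Cp^*$ everywhere. *)

(* Defs.v *)
From HB Require Import structures.
From mathcomp Require Import all_boot all_order all_algebra.
From mathcomp Require Import all_classical all_reals all_analysis.
From mathcomp Require Import measurable_realfun.
Set Implicit Arguments. Unset Strict Implicit. Unset Printing Implicit Defensive.
Import Order.TTheory GRing.Theory Num.Theory.
Import numFieldNormedType.Exports.
Local Open Scope classical_set_scope.
Local Open Scope ring_scope.

Section Defs.
Variable R : realType.

Definition pdens (lam del t z : R) : R :=
  if 0 < z then
    (Num.sqrt (4 * pi))^-1 * del * t * z `^ (- (3 / 2))
      * expR (- ((del * t - 2 * Num.sqrt lam * z) ^+ 2) / (4 * z))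
  else 0.

Definition rho (lam del c s x t y : R) : R :=
  if s < t then c * pdens lam del (c * (t - s)) (c * (y - x)) else 0.

Definition lfun (alpha : R) : R :=
  sup [set ln (1 + tau) - (tau - alpha) / (1 + tau) * ln (alpha * tau)
      | tau in [set tau | Num.max alpha alpha^-1 <= tau]].

Definition Dconst (a b : R) : R :=
  (b / (b - a)) `^ (3 / 2) * expR (3 / 2 * lfun (a / (b - a))).

Definition regular_superadditive (Q : R -> R -> R) : Prop :=
  [/\ (forall s t, s < t -> 0 <= Q s t),
      (forall s u t, s < u -> u < t -> Q s u + Q u t <= Q s t),
      (forall s t, s < t -> Q s' t @[s' --> s^'+] --> Q s t)
    & (forall s t, s < t -> Q s t' @[t' --> t^'-] --> Q s t)].

Definition in_N (p ps : R -> R -> R -> R -> R) (C eta : R) (Q : R -> R -> R)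
    (q : R * R -> \bar R) : Prop :=
  [/\ [/\ 1 <= C, 0 <= eta & regular_superadditive Q],
      (forall uz, (0 <= q uz)%E) /\ measurable_fun [set: R * R] q,
      (forall s t x y, s < t ->
        (\int[lebesgue_measure]_(u in `[s, t])
           \int[lebesgue_measure]_(z in [set: R])
              ((p s x u z)%:E * q (u, z) * (ps u z t y)%:E)
         <= (eta + Q s t)%:E * (ps s x t y)%:E)%E)
    & (forall s x t y, p s x t y <= C * ps s x t y)].

End Defs.

(* Main.v *)
Require Import Defs.
From HB Require Import structures.
From mathcomp Require Import all_boot all_order all_algebra.
From mathcomp Require Import all_classical all_reals all_analysis.
From mathcomp Require Import measurable_realfun.
From mathcomp Require Import ring lra.
Import Order.TTheory GRing.Theory Num.Theory.
Import numFieldNormedType.Exports.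
Local Open Scope classical_set_scope.
Local Open Scope ring_scope.

Section IntLemmas.
Context d (T : measurableType d) (R : realType) (mu : {measure set T -> \bar R}).
Local Open Scope ereal_scope.
Import HBNNSimple.

Lemma int_le_ge0 (D : set T) (f g : T -> \bar R) :
  (forall x, D x -> 0 <= f x) -> (forall x, D x -> f x <= g x) ->
  \int[mu]_(x in D) f x <= \int[mu]_(x in D) g x.
Proof.
move=> f0 fg.
have g0 : forall x, D x -> 0 <= g x by move=> x Dx; exact: le_trans (f0 x Dx) (fg x Dx).
rewrite (ge0_integralE mu f0) (ge0_integralE mu g0) /=.
apply: ereal_sup_le => _ [h hf <-]; exists h => //= x.
apply: le_trans (hf x) _; rewrite /patch; case: ifPn => // xD.
by apply: fg; rewrite inE in xD.
Qed.

Lemma int_scale_le (D : set T) (f : T -> \bar R) (k : R) :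
  (0 <= k)%R -> (forall x, D x -> 0 <= f x) ->
  \int[mu]_(x in D) (k%:E * f x) <= k%:E * \int[mu]_(x in D) f x.
Proof.
move=> k0 f0; have [->|kn0] := eqVneq k 0%R.
  rewrite mul0e integral0_eq // => x _; exact: mul0e.
have kp : (0 < k)%R by rewrite lt_def kn0.
have kf0 : forall x, D x -> 0 <= k%:E * f x.
  by move=> x Dx; rewrite mule_ge0 // ?lee_fin // f0.
rewrite (ge0_integralE mu kf0) (ge0_integralE mu f0) /=.
apply: ge_ereal_sup => _ [h hf <-].
have k'0 : (0 <= k^-1)%R by rewrite invr_ge0.
pose h' := scale_nnsfun h k'0.
have eh : sintegral mu h = k%:E * sintegral mu h'.
  rewrite (_ : NonNegSimpleFun.sort h' = (cst k^-1 \* h)%R) //.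
  by rewrite sintegralrM muleA -EFinM mulfV // mul1e.
rewrite eh; apply: lee_wpmul2l; first by rewrite lee_fin.
apply: ereal_sup_ubound; exists h' => //= x.
have := hf x; rewrite erestrict_scale /= => hx.
have -> : ((k^-1 * h x)%:E) = k^-1%:E * (h x)%:E by rewrite EFinM.
apply: le_trans (lee_wpmul2l _ hx) _; first by rewrite lee_fin.
by rewrite muleA -EFinM mulVf // mul1e.
Qed.

End IntLemmas.

Section Real.
Variable R : realType.

Lemma lnMp (x y : R) : 0 < x -> 0 < y -> ln (x * y) = ln x + ln y.
Proof. by move=> x0 y0; rewrite lnM // posrE. Qed.

Definition Lf (c T Z w : R) : R :=
  ln c / 2 + ln T - 3 / 2 * ln Z - c * w ^+ 2 / (4 * Z).

Definition k0 (del : R) : R := ln (Num.sqrt (4 * pi))^-1 + ln del.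

Lemma rho_exp (lam del c s x t y : R) : 0 < del -> 0 < c -> s < t -> x < y ->
  rho lam del c s x t y =
  expR (k0 del + Lf c (t - s) (y - x) (del * (t - s) - 2 * Num.sqrt lam * (y - x))).
Proof.
move=> d0 c0 st xy.
have T0 : 0 < t - s by rewrite subr_gt0.
have Z0 : 0 < y - x by rewrite subr_gt0.
have cT0 : 0 < c * (t - s) by rewrite mulr_gt0.
have cZ0 : 0 < c * (y - x) by rewrite mulr_gt0.
have K0 : 0 < (Num.sqrt (4 * pi))^-1 :> R.
  by rewrite invr_gt0 sqrtr_gt0 mulr_gt0 ?pi_gt0.
rewrite /rho st /pdens cZ0.
set E := expR _.
have E0 : 0 < E by rewrite expR_gt0.
set P := _ `^ _.
have P0 : 0 < P by rewrite powR_gt0.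
have pos : 0 < c * ((Num.sqrt (4 * pi))^-1 * del * (c * (t - s)) * P * E).
  by rewrite !mulr_gt0.
rewrite -[LHS](lnK pos) ?posrE //; congr expR.
rewrite !lnMp ?mulr_gt0 // /P ln_powR /E expRK /k0 /Lf !lnMp //.
field. by rewrite !gt_eqF.
Qed.


Lemma ln_le_sub1 (y : R) : 0 < y -> ln y <= y - 1.
Proof.
move=> y0; have := @le_ln1Dx R (y - 1).
rewrite (_ : 1 + (y - 1) = y); last by rewrite addrC subrK.
apply; lra.
Qed.

Lemma lnXr (x : R) (n : nat) : 0 < x -> ln (x ^+ n) = n%:R * ln x.
Proof. by move=> x0; rewrite lnXn // mulr_natl. Qed.

Lemma poly1 (a b : R) : 0 < a -> a < b -> b <= 2 * a ->
  (2 * b - a) ^+ 3 * (b - a) ^+ 2 <= b ^+ 5.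
Proof.
move=> a0 ab b2a.
set d := b - a.
have d0 : 0 < d by rewrite subr_gt0.
have da : d <= a by rewrite /d; lra.
have -> : b = a + d by rewrite /d; ring.
have -> : 2 * (a + d) - a = a + 2 * d by ring.
have h1 : a * d ^+ 4 <= a ^+ 3 * d ^+ 2.
  have : d ^+ 2 <= a ^+ 2 by rewrite ler_pXn2r // ?nnegrE ltW.
  move=> h; have := ler_wpM2l (ltW (mulr_gt0 a0 (exprn_gt0 2 d0))) h.
  have -> : a * d ^+ 4 = a * d ^+ 2 * d ^+ 2 by ring.
  have -> : a ^+ 3 * d ^+ 2 = a * d ^+ 2 * a ^+ 2 by ring.
  done.
have h2 : d ^+ 5 <= a ^+ 4 * d.
  have : d ^+ 4 <= a ^+ 4 by rewrite ler_pXn2r // ?nnegrE ltW.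
  move=> h; have := ler_wpM2r (ltW d0) h.
  by have -> : d ^+ 5 = d ^+ 4 * d by ring.
have h3 : 0 <= a ^+ 3 * ((a - d) ^+ 2 + d ^+ 2).
  by apply: mulr_ge0; [exact: exprn_ge0 (ltW a0)|apply: addr_ge0; exact: sqr_ge0].
have h4 : 0 <= a ^+ 2 * d ^+ 3.
  by apply: mulr_ge0; apply: exprn_ge0; apply: ltW.
nra.
Qed.

Lemma poly2 (a b : R) : 0 < a -> 2 * a < b ->
  (2 * b - a) ^+ 3 * a ^+ 2 <= b ^+ 5.
Proof.
move=> a0 b2a.
set e := b - 2 * a.
have e0 : 0 < e by rewrite /e subr_gt0.
have -> : b = 2 * a + e by rewrite /e; ring.
have m : forall i j, 0 <= a ^+ i * e ^+ j.
  by move=> i j; apply: mulr_ge0; apply: exprn_ge0; apply: ltW.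
have := m 5%N 0%N; have := m 4%N 1%N; have := m 3%N 2%N; have := m 2%N 3%N;
have := m 1%N 4%N; have := m 0%N 5%N.
rewrite !expr0 !mulr1 !mul1r !expr1 => *.
nra.
Qed.


Lemma core_log (a b Dl T1 T2 Z1 Z2 w1 w2 : R) :
  0 < a -> a < b -> 0 < T1 -> 0 < T2 -> 0 < Z1 -> 0 < Z2 ->
  3 / 2 * (ln b - ln (b - a)) +
    3 / 2 * ln (1 + Num.max (a / (b - a)) (a / (b - a))^-1) <= Dl ->
  Lf b T1 Z1 w1 + Lf a T2 Z2 w2 <=
  Dl + Num.max (Lf a (T1 + T2) (Z1 + Z2) (w1 + w2) + Lf (b - a) T1 Z1 w1)
               (Lf a (T1 + T2) (Z1 + Z2) (w1 + w2) + Lf a T2 Z2 w2).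
Proof.
move=> a0 ab T10 T20 Z10 Z20 hD.
have ba0 : 0 < b - a by rewrite subr_gt0.
have b0 : 0 < b by apply: lt_trans ab.
have c0 : 0 < 2 * b - a by lra.
set A := ln b - ln (b - a).
set B := ln b - ln a.
set C := ln (2 * b - a) - ln (b - a).
have hcst : (forall u, 0 <= u <= 1 ->
    (1 - u) * B / 2 + u * A / 2 + 3 / 2 * C <= Dl) /\ 2 * A <= Dl.
  have [h2|h2] := leP b (2 * a).
  - have al1 : 1 <= a / (b - a) by rewrite ler_pdivlMr //; lra.
    rewrite (_ : Num.max (a / (b - a)) (a / (b - a))^-1 = a / (b - a)) in hD; last first.
      have al0 : 0 < a / (b - a) by apply: divr_gt0.
      by apply: max_l; apply: (le_trans _ al1); rewrite invf_le1.
    have e1 : 1 + a / (b - a) = b / (b - a) by field; rewrite gt_eqF.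
    rewrite e1 ln_div ?posrE // -/A in hD.
    have BA : B <= A.
      rewrite /A /B; have : ln (b - a) <= ln a by rewrite ler_ln ?posrE //; lra.
      lra.
    have hp := poly1 a b a0 ab h2.
    have : ln ((2 * b - a) ^+ 3 * (b - a) ^+ 2) <= ln (b ^+ 5).
      by rewrite ler_ln ?posrE // ?mulr_gt0 ?exprn_gt0.
    rewrite lnMp ?exprn_gt0 // !lnXr // => hl.
    rewrite /C.
    have A0 : A >= 0.
      rewrite /A; have : ln (b - a) <= ln b by rewrite ler_ln ?posrE //; lra.
      lra.
    split; last by lra.
    move=> u /andP[u0 u1].
    have X : (1 - u) * B <= (1 - u) * A by rewrite ler_wpM2l //; lra.
    rewrite /A /B in hD X A0 *; lra.
  - have al1 : a / (b - a) < 1 by rewrite ltr_pdivrMr //; lra.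
    have al0 : 0 < a / (b - a) by apply: divr_gt0.
    rewrite (_ : Num.max (a / (b - a)) (a / (b - a))^-1 = (a / (b - a))^-1) in hD; last first.
      apply: max_r; rewrite (le_trans (ltW al1)) // invf_ge1 //; lra.
    have e1 : 1 + (a / (b - a))^-1 = b / a by field; rewrite !gt_eqF.
    rewrite e1 ln_div ?posrE // -/B in hD.
    have AB : A <= B.
      rewrite /A /B; have : ln a <= ln (b - a) by rewrite ler_ln ?posrE //; lra.
      lra.
    have hp := poly2 a b a0 h2.
    have : ln ((2 * b - a) ^+ 3 * a ^+ 2) <= ln (b ^+ 5).
      by rewrite ler_ln ?posrE // ?mulr_gt0 ?exprn_gt0.
    rewrite lnMp ?exprn_gt0 // !lnXr // => hl.
    rewrite /C.
    have A0 : A >= 0.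
      rewrite /A; have : ln (b - a) <= ln b by rewrite ler_ln ?posrE //; lra.
      lra.
    split; last by rewrite /A /B in hD AB A0 *; lra.
    move=> u /andP[u0 u1].
    have X : u * A <= u * B by rewrite ler_wpM2l.
    rewrite /A /B in hD X A0 AB *; lra.
have [hU hA2] := hcst.
have Z0 : 0 < Z1 + Z2 by rewrite addr_gt0.
have T0 : 0 < T1 + T2 by rewrite addr_gt0.
have lT1 : ln T1 <= ln (T1 + T2) by rewrite ler_ln ?posrE //; lra.
have lT2 : ln T2 <= ln (T1 + T2) by rewrite ler_ln ?posrE //; lra.
have Mle1 : Lf a (T1 + T2) (Z1 + Z2) (w1 + w2) + Lf (b - a) T1 Z1 w1 <=
  Num.max (Lf a (T1 + T2) (Z1 + Z2) (w1 + w2) + Lf (b - a) T1 Z1 w1)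
          (Lf a (T1 + T2) (Z1 + Z2) (w1 + w2) + Lf a T2 Z2 w2) by rewrite le_max lexx.
have Mle2 : Lf a (T1 + T2) (Z1 + Z2) (w1 + w2) + Lf a T2 Z2 w2 <=
  Num.max (Lf a (T1 + T2) (Z1 + Z2) (w1 + w2) + Lf (b - a) T1 Z1 w1)
          (Lf a (T1 + T2) (Z1 + Z2) (w1 + w2) + Lf a T2 Z2 w2) by rewrite le_max lexx orbT.
move: Mle1 Mle2; set M := Num.max _ _ => Mle1 Mle2.
have [hu|hu] := leP ((b - a) * (Z1 + Z2)) (b * Z2).
  have id1 : Lf b T1 Z1 w1 + Lf a T2 Z2 w2 -
      (Lf a (T1 + T2) (Z1 + Z2) (w1 + w2) + Lf (b - a) T1 Z1 w1) =
      A / 2 + (ln T2 - ln (T1 + T2)) + 3 / 2 * (ln (Z1 + Z2) - ln Z2) -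
      a * (w1 * Z2 - w2 * Z1) ^+ 2 / (4 * Z1 * Z2 * (Z1 + Z2)).
    rewrite /Lf /A; field.
    by rewrite !gt_eqF.
  have lZ : ln (Z1 + Z2) - ln Z2 <= A.
    have : ln ((b - a) * (Z1 + Z2)) <= ln (b * Z2) by rewrite ler_ln ?posrE ?mulr_gt0.
    rewrite !lnMp //; rewrite /A; lra.
  have sq : 0 <= a * (w1 * Z2 - w2 * Z1) ^+ 2 / (4 * Z1 * Z2 * (Z1 + Z2)).
    by apply: divr_ge0; [apply: mulr_ge0; [lra|apply: sqr_ge0]|rewrite !mulr_ge0 //; lra].
  lra.
set u := b * Z2 / ((b - a) * (Z1 + Z2)).
have u0 : 0 <= u by apply: divr_ge0; [rewrite mulr_ge0 //; lra|rewrite mulr_ge0 //; lra].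
have u1 : u <= 1 by rewrite ler_pdivrMr ?mulr_gt0 //; lra.
have id2 : u * (Lf b T1 Z1 w1 + Lf a T2 Z2 w2 -
      (Lf a (T1 + T2) (Z1 + Z2) (w1 + w2) + Lf (b - a) T1 Z1 w1)) +
    (1 - u) * (Lf b T1 Z1 w1 + Lf a T2 Z2 w2 -
      (Lf a (T1 + T2) (Z1 + Z2) (w1 + w2) + Lf a T2 Z2 w2)) =
    (1 - u) * B / 2 + u * A / 2 + ((1 - u) * ln T1 + u * ln T2 - ln (T1 + T2)) +
    3 / 2 * (u * (ln (Z1 + Z2) - ln Z2) + (1 - u) * (ln (Z1 + Z2) - ln Z1)) -
    ((b - a) * w1 - a * w2) ^+ 2 / (4 * (b - a) * (Z1 + Z2)).
  rewrite /Lf /A /B /u; field.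
  by rewrite !gt_eqF.
have sq : 0 <= ((b - a) * w1 - a * w2) ^+ 2 / (4 * (b - a) * (Z1 + Z2)).
  by apply: divr_ge0; [apply: sqr_ge0|rewrite !mulr_ge0 //; lra].
have hT1 : (1 - u) * ln T1 <= (1 - u) * ln (T1 + T2) by rewrite ler_wpM2l //; lra.
have hT2 : u * ln T2 <= u * ln (T1 + T2) by rewrite ler_wpM2l.
(* Jensen *)
have cp : 0 < (2 * b - a) / (b - a) by apply: divr_gt0.
have lc : ln ((2 * b - a) / (b - a)) = C by rewrite ln_div ?posrE.
have y10 : 0 < (Z1 + Z2) / (Z2 * ((2 * b - a) / (b - a))) by apply: divr_gt0 => //; apply: mulr_gt0.
have y20 : 0 < (Z1 + Z2) / (Z1 * ((2 * b - a) / (b - a))) by apply: divr_gt0 => //; apply: mulr_gt0.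
have ly1 : ln ((Z1 + Z2) / (Z2 * ((2 * b - a) / (b - a)))) =
    ln (Z1 + Z2) - ln Z2 - C.
  rewrite ln_div ?posrE //; last by apply: mulr_gt0.
  rewrite lnMp // lc; ring.
have ly2 : ln ((Z1 + Z2) / (Z1 * ((2 * b - a) / (b - a)))) =
    ln (Z1 + Z2) - ln Z1 - C.
  rewrite ln_div ?posrE //; last by apply: mulr_gt0.
  rewrite lnMp // lc; ring.
have j1 := ln_le_sub1 _ y10; have j2 := ln_le_sub1 _ y20.
rewrite ly1 in j1; rewrite ly2 in j2.
have j1' := ler_wpM2l u0 j1.
have j2' : (1 - u) * (ln (Z1 + Z2) - ln Z1 - C) <=
  (1 - u) * ((Z1 + Z2) / (Z1 * ((2 * b - a) / (b - a))) - 1) by rewrite ler_wpM2l //; lra.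
have e1 : u * ((Z1 + Z2) / (Z2 * ((2 * b - a) / (b - a)))) = b / (2 * b - a).
  by rewrite /u; field; rewrite !gt_eqF.
have e2 : (1 - u) * ((Z1 + Z2) / (Z1 * ((2 * b - a) / (b - a)))) =
    (b - a) / (2 * b - a) - a * Z2 / ((2 * b - a) * Z1).
  by rewrite /u; field; rewrite !gt_eqF.
have e3 : b / (2 * b - a) + (b - a) / (2 * b - a) = 1.
  by field; rewrite gt_eqF.
have pz : 0 <= a * Z2 / ((2 * b - a) * Z1) by rewrite divr_ge0 ?mulr_ge0 //; lra.
have hu' := hU u (introT andP (conj u0 u1)).
have hM1 := ler_wpM2l u0 Mle1.
have hM2 : (1 - u) * (Lf a (T1 + T2) (Z1 + Z2) (w1 + w2) + Lf a T2 Z2 w2) <= (1 - u) * M.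
  by rewrite ler_wpM2l //; lra.
lra.
Qed.

Lemma lfun_ge (al : R) : 0 < al -> ln (1 + Num.max al al^-1) <= lfun al.
Proof.
move=> al0; rewrite /lfun.
set E := [set _ | _ in _].
have mem : E (ln (1 + Num.max al al^-1)).
  exists (Num.max al al^-1); first exact: lexx.
  case: (leP al^-1 al) => h.
    by rewrite subrr !mul0r subr0.
  by rewrite mulfV ?gt_eqF // ln1 mulr0 subr0.
apply: (sup_upper_bound _ mem); split; first by exists (ln (1 + Num.max al al^-1)).
exists (al * (1 + al) + al^-1 + 1) => _ [tau /= htau <-].
have ta : al <= tau by apply: le_trans htau; rewrite le_max lexx.
have ti : al^-1 <= tau by apply: le_trans htau; rewrite le_max lexx orbT.
have tau0 : 0 < tau by apply: lt_le_trans ta.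
have at1 : 1 <= al * tau.
  by rewrite -(mulfV (lt0r_neq0 al0)) ler_wpM2l // ltW.
have at0 : 0 < al * tau by apply: mulr_gt0.
have t10 : 0 < 1 + tau by lra.
set L1 := ln (al * tau).
have L10 : 0 <= L1 by apply: ln_ge0.
have L1le : L1 <= al * tau - 1 by apply: ln_le_sub1.
have id : ln (1 + tau) - (tau - al) / (1 + tau) * L1 =
    L1 * ((1 + al) / (1 + tau)) + (ln (1 + tau) - L1).
  by field; rewrite gt_eqF.
rewrite id.
have h1 : L1 * ((1 + al) / (1 + tau)) <= (al * tau - 1) * ((1 + al) / (1 + tau)).
  by apply: ler_wpM2r => //; apply: divr_ge0; lra.
have h2 : (al * tau - 1) * ((1 + al) / (1 + tau)) <= al * (1 + al).
  rewrite mulrA ler_pdivrMr //; nra.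
have h3 : ln (1 + tau) - L1 <= (1 + tau) / (al * tau) - 1.
  by rewrite /L1 -ln_div ?posrE //; apply: ln_le_sub1; apply: divr_gt0.
have h4 : (1 + tau) / (al * tau) = (al * tau)^-1 + al^-1.
  by field; rewrite !gt_eqF.
have h5 : (al * tau)^-1 <= 1 by rewrite invf_le1.
lra.
Qed.

Lemma lnD_ge (a b : R) : 0 < a -> a < b ->
  3 / 2 * (ln b - ln (b - a)) +
    3 / 2 * ln (1 + Num.max (a / (b - a)) (a / (b - a))^-1) <= ln (Dconst a b).
Proof.
move=> a0 ab.
have ba0 : 0 < b - a by rewrite subr_gt0.
have b0 : 0 < b by apply: lt_trans ab.
rewrite /Dconst lnMp ?powR_gt0 ?divr_gt0 ?expR_gt0 // ln_powR expRK ln_div ?posrE //.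
have := lfun_ge _ (divr_gt0 a0 ba0); lra.
Qed.

Lemma Dconst_gt0 (a b : R) : 0 < a -> a < b -> 0 < Dconst a b.
Proof.
move=> a0 ab; have ba0 : 0 < b - a by rewrite subr_gt0.
by rewrite /Dconst mulr_gt0 ?powR_gt0 ?expR_gt0 // divr_gt0 // (lt_trans a0 ab).
Qed.

Lemma rho0 (lam del c s x t y : R) : 0 < c -> ~~ (s < t) || ~~ (x < y) ->
  rho lam del c s x t y = 0.
Proof.
move=> c0 /orP[h|h]; rewrite /rho.
  by rewrite (negbTE h).
case: ifP => // _; rewrite /pdens; case: ifP => h'.
  by move: h'; rewrite pmulr_rgt0 // subr_gt0 (negbTE h).
by rewrite mulr0.
Qed.

Lemma rho_ge0 (lam del c s x t y : R) : 0 < del -> 0 < c -> 0 <= rho lam del c s x t y.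
Proof.
move=> d0 c0; case: (boolP ((s < t) && (x < y))) => [/andP[st xy]|h].
  by rewrite rho_exp // ltW // expR_gt0.
by rewrite rho0 // -negb_and.
Qed.

Lemma fin_step (K D L1 L2 L L3 L4 : R) : 0 < D ->
  L1 + L2 <= ln D + Num.max (L + L3) (L + L4) ->
  expR (K + L1) * expR (K + L2) <= D * expR (K + L) * (expR (K + L3) + expR (K + L4)).
Proof.
move=> D0; have eD : D = expR (ln D) by rewrite lnK // posrE.
have e0 : 0 <= D * expR (K + L) by rewrite mulr_ge0 ?expR_ge0 // ltW.
case: (leP (L + L3) (L + L4)) => hm h.
  apply: (@le_trans _ _ (D * expR (K + L) * expR (K + L4))).
    by rewrite {1}eD -!expRD ler_expR; lra.
  by rewrite ler_wpM2l // lerDr expR_ge0.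
apply: (@le_trans _ _ (D * expR (K + L) * expR (K + L3))).
  by rewrite {1}eD -!expRD ler_expR; lra.
by rewrite ler_wpM2l // lerDl expR_ge0.
Qed.

Lemma pw (lam del a b s x u z t y : R) : 0 < del -> 0 < a -> a < b ->
  rho lam del b s x u z * rho lam del a u z t y <=
  Dconst a b * rho lam del a s x t y *
    (rho lam del (b - a) s x u z + rho lam del a u z t y).
Proof.
move=> d0 a0 ab.
have b0 : 0 < b by apply: lt_trans ab.
have ba0 : 0 < b - a by rewrite subr_gt0.
have D0 := Dconst_gt0 a b a0 ab.
have rg := fun c s x t y (c0 : 0 < c) => @rho_ge0 lam del c s x t y d0 c0.
case: (boolP [&& s < u, u < t, x < z & z < y]) => [/and4P[su ut xz zy] | hn].
  rewrite (rho_exp lam del b s x u z d0 b0 su xz) (rho_exp lam del a u z t y d0 a0 ut zy).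
  rewrite (rho_exp lam del a s x t y d0 a0 (lt_trans su ut) (lt_trans xz zy)).
  rewrite (rho_exp lam del (b - a) s x u z d0 ba0 su xz).
  have -> : t - s = (u - s) + (t - u) by ring.
  have -> : y - x = (z - x) + (y - z) by ring.
  have -> : del * (u - s + (t - u)) - 2 * Num.sqrt lam * (z - x + (y - z)) =
    (del * (u - s) - 2 * Num.sqrt lam * (z - x)) +
    (del * (t - u) - 2 * Num.sqrt lam * (y - z)) by ring.
  have T10 : 0 < u - s by rewrite subr_gt0.
  have T20 : 0 < t - u by rewrite subr_gt0.
  have Z10 : 0 < z - x by rewrite subr_gt0.
  have Z20 : 0 < y - z by rewrite subr_gt0.
  have hc := core_log a b (ln (Dconst a b)) (u - s) (t - u) (z - x) (y - z) (del * (u - s) - 2 * Num.sqrt lam * (z - x))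
    (del * (t - u) - 2 * Num.sqrt lam * (y - z)) a0 ab
    T10 T20 Z10 Z20 (lnD_ge a b a0 ab).
  exact: fin_step D0 hc.
have h0 : 0 <= Dconst a b * rho lam del a s x t y *
    (rho lam del (b - a) s x u z + rho lam del a u z t y).
  apply: mulr_ge0; first by apply: mulr_ge0; [exact: ltW|apply: rg].
  by apply: addr_ge0; apply: rg.
case: (boolP ((s < u) && (x < z))) => [/andP[su xz]|h1].
  rewrite su xz /= in hn.
  have hz : rho lam del a u z t y = 0 by apply: rho0 => //; rewrite -negb_and.
  by rewrite [in X in X <= _]hz mulr0.
have hz : rho lam del b s x u z = 0 by apply: rho0 => //; rewrite -negb_and.
by rewrite [in X in X <= _]hz mul0r.
Qed.

End Real.


Theorem corollary2p3 (R : realType) (lam del a b eta : R) (Q : R -> R -> R)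
    (q : R * R -> \bar R) :
  0 <= lam -> 0 < del -> 0 < a -> a < b -> 0 <= eta ->
  regular_superadditive Q ->
  (forall uz, (0 <= q uz)%E) -> measurable_fun [set: R * R] q ->
  (forall s t x y, s < t -> x < y ->
    ((Dconst a b)%:E *
      \int[lebesgue_measure]_(u in `[s, t])
        \int[lebesgue_measure]_(z in [set: R])
          (((rho lam del (b - a) s x u z + rho lam del a u z t y)%:E) * q (u, z))
     <= (eta + Q s t)%:E)%E) ->
  in_N (rho lam del b) (rho lam del a) (Num.sqrt (b / a)) eta Q q.
Proof.
move=> lam0 d0 a0 ab eta0 hQ q0 mq hyp.
have b0 : 0 < b by apply: lt_trans ab.
have ba0 : 0 < b - a by rewrite subr_gt0.
have D0 := @Dconst_gt0 R a b a0 ab.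
have rg := fun c s x t y (c0 : 0 < c) => @rho_ge0 R lam del c s x t y d0 c0.
split => //.
- split => //.
  have h1 : 1 <= b / a by rewrite ler_pdivlMr // mul1r ltW.
  by rewrite -{1}sqrtr1 ler_sqrt // (le_trans ler01 h1).
- move=> s t x y st.
  set r0 := rho lam del a s x t y.
  have r00 : 0 <= r0 by apply: rg.
  set I := (\int[lebesgue_measure]_(u in `[s, t])
        \int[lebesgue_measure]_(z in [set: R])
          (((rho lam del (b - a) s x u z + rho lam del a u z t y)%:E) * q (u, z)))%E.
  have I0 : (0 <= I)%E.
    apply: integral_ge0 => u _; apply: integral_ge0 => z _.
    by apply: mule_ge0 => //; rewrite lee_fin addr_ge0 // rg.
  have Dr0 : 0 <= Dconst a b * r0 by rewrite mulr_ge0 // ltW.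
  apply: (@le_trans _ _ ((Dconst a b * r0)%:E * I)%E).
    apply: (@le_trans _ _ (\int[lebesgue_measure]_(u in `[s, t])
        ((Dconst a b * r0)%:E * \int[lebesgue_measure]_(z in [set: R])
          (((rho lam del (b - a) s x u z + rho lam del a u z t y)%:E) * q (u, z))))%E);
      last first.
      apply: int_scale_le => // u _; apply: integral_ge0 => z _.
      by apply: mule_ge0 => //; rewrite lee_fin addr_ge0 // rg.
    apply: int_le_ge0 => u _.
      apply: integral_ge0 => z _.
      by apply: mule_ge0; [apply: mule_ge0 => //|]; rewrite lee_fin rg.
    apply: (@le_trans _ _ (\int[lebesgue_measure]_(z in [set: R])
        ((Dconst a b * r0)%:E *
          (((rho lam del (b - a) s x u z + rho lam del a u z t y)%:E) * q (u, z))))%E);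
      last first.
      apply: int_scale_le => // z _.
      by apply: mule_ge0 => //; rewrite lee_fin addr_ge0 // rg.
    apply: int_le_ge0 => z _.
      by apply: mule_ge0; [apply: mule_ge0 => //|]; rewrite lee_fin rg.
    rewrite muleAC -EFinM muleA -EFinM.
    apply: lee_wpmul2r => //; rewrite lee_fin.
    exact: pw.
  case: (boolP (x < y)) => xy.
    rewrite EFinM (muleC (Dconst a b)%:E) -muleA muleC.
    by apply: lee_wpmul2r; [rewrite lee_fin | exact: hyp].
  have -> : r0 = 0 by rewrite /r0 rho0 // xy orbT.
  by rewrite mulr0 !mul0e mule0.
- move=> s x t y.
  case: (boolP ((s < t) && (x < y))) => [/andP[st xy]|h]; last first.
    by rewrite !rho0 ?mulr0 // -negb_and.
  rewrite !rho_exp //.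
  have sq0 : 0 < Num.sqrt (b / a) by rewrite sqrtr_gt0 divr_gt0.
  have esq : Num.sqrt (b / a) = expR ((ln b - ln a) / 2).
    rewrite -[LHS](lnK (x:=Num.sqrt (b / a))) ?posrE //.
    by rewrite -powR12_sqrt ?divr_ge0 ?ltW // ln_powR ln_div ?posrE // mulrC.
  rewrite esq -expRD ler_expR /Lf.
  set w := del * (t - s) - 2 * Num.sqrt lam * (y - x).
  have Z0 : 0 < y - x by rewrite subr_gt0.
  have hw : 0 <= w ^+ 2 / (4 * (y - x)).
    apply: divr_ge0; first exact: sqr_ge0.
    by apply: mulr_ge0 => //; apply: ltW.
  have := ler_wpM2l hw (ltW ab).
  rewrite !(mulrC (w ^+ 2 / _)) !mulrA.
  lra.
Qed.
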